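(* If an acyclic VCCR $f$ satisfies Positive Involvement in Defeat and Majority Defeat, then the VSCC $\overline f$ satisfies Tolerant Positive Involvement. In particular, the Split Cycle VSCC $\overline{sc}$ and the Weighted Covering VSCC $\overline{wc}$ satisfy Tolerant Positive Involvement, since $sc$ and $wc$ both satisfy Positive Involvement in Defeat and Majority Defeat.
   Context: Profiles: $\mathbf P:V\to\mathcal L(X)$, $V$ nonempty finite set of voters, $X=X(\mathbf P)$ nonempty finite set of candidates, $\mathcal L(X)$ strict linear orders. $\mathrm{Margin}_{\mathbf P}(x,y)$ = #voters ranking $x$ above $y$ minus #ranking $y$ above $x$; $x$ majority preferred to $y$ if $>0$. A majority path: sequence of candidates with positive consecutive margins; strength = minimum of those margins. A VCCR $f$ assigns to each profile an asymmetric relation $f(\mathbf P)$ on $X(\mathbf P)$; it is acyclic if every $f(\mathbf P)$ has no cycle. $\overline f(\mathbf P)=\{x: \text{no } y \text{ with } (y,x)\in f(\mathbf P)\}$ (a VSCC when $f$ is acyclic). $sc$: $(x,y)\in sc(\mathbf P)$ iff $\mathrm{Margin}_{\mathbf P}(x,y)>0$ exceeds the strength of every majority path from $y$ to $x$. $wc$: $(x,y)\in wc(\mathbf P)$ iff $\mathrm{Margin}_{\mathbf P}(x,y)>0$ and $\mathrm{Margin}_{\mathbf P}(x,z)\ge\mathrm{Margin}_{\mathbf P}(y,z)$ for all $z$. Positive Involvement in Defeat: if $(x,y)\notin f(\mathbf P)$ and $\mathbf P'$ adds one new voter ranking $y$ above $x$, then $(x,y)\notin f(\mathbf P')$. Majority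 Defeat: $(x,y)\in f(\mathbf P)$ implies $\mathrm{Margin}_{\mathbf P}(x,y)>0$. A VSCC $F$ satisfies Tolerant Positive Involvement if whenever $x\in F(\mathbf P)$ and $\mathbf P'$ is obtained by adding one new voter who ranks $x$ above every other candidate $y$ such that $x$ is not majority preferred to $y$ in $\mathbf P$, then $x\in F(\mathbf P')$. *)

(* Defs.v *)
From mathcomp Require Import all_boot all_order all_algebra.
Set Implicit Arguments. Unset Strict Implicit. Unset Printing Implicit Defensive.
Import Order.TTheory GRing.Theory Num.Theory.
Local Open Scope ring_scope.

(* A profile: a nonempty finite set of voters V (duplicate-free list),
   a nonempty finite set of candidates X (duplicate-free list), and for each
   voter v in V a ballot, a strict linear order on X given as a list
   (best first) that is a permutation of X. *)
Record profile := Profile {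
  voters : seq nat;
  cands : seq nat;
  ballot : nat -> seq nat;
  voters_uniq : uniq voters;
  cands_uniq : uniq cands;
  voters_ne : voters != [::];
  cands_ne : cands != [::];
  ballot_perm : forall v, v \in voters -> perm_eq (ballot v) cands
}.

Definition prefers (P : profile) (v x y : nat) : bool :=
  (index x (ballot P v) < index y (ballot P v))%N.

Definition Margin (P : profile) (x y : nat) : int :=
  (count (fun v => prefers P v x y) (voters P))%:Z
  - (count (fun v => prefers P v y x) (voters P))%:Z.

Definition majority_pref (P : profile) (x y : nat) : Prop := 0 < Margin P x y.

Fixpoint mpath (P : profile) (a : nat) (s : seq nat) : Prop :=
  match s with
  | [::] => True
  | b :: s' => b \in cands P /\ 0 < Margin P a b /\ mpath P b s'
  end.

Fixpoint strength (P : profile) (a : nat) (s : seq nat) : int :=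
  match s with
  | [::] => 0
  | b :: s' =>
      if s' is [::] then Margin P a b
      else Num.min (Margin P a b) (strength P b s')
  end.

Definition majority_path (P : profile) (y : nat) (s : seq nat) (x : nat) : Prop :=
  y \in cands P /\ s <> [::] /\ last y s = x /\ mpath P y s.

Definition VCCR := profile -> nat -> nat -> Prop.
Definition VSCC := profile -> nat -> Prop.

Definition is_VCCR (f : VCCR) : Prop :=
  forall P x y, f P x y -> [/\ x \in cands P, y \in cands P & ~ f P y x].

Fixpoint Rpath (R : nat -> nat -> Prop) (x : nat) (s : seq nat) : Prop :=
  match s with
  | [::] => True
  | y :: s' => R x y /\ Rpath R y s'
  end.

Definition acyclic (f : VCCR) : Prop :=
  forall P x s, ~ Rpath (f P) x (rcons s x).

Definition fbar (f : VCCR) : VSCC :=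
  fun P x => x \in cands P /\ forall y, ~ f P y x.

Definition add_voter (P P' : profile) (v : nat) : Prop :=
  [/\ v \notin voters P,
      voters P' =i v :: voters P,
      cands P' =i cands P &
      forall u, u \in voters P -> ballot P' u = ballot P u].

Definition pos_involvement_in_defeat (f : VCCR) : Prop :=
  forall P P' v x y, x \in cands P -> y \in cands P ->
    ~ f P x y -> add_voter P P' v -> prefers P' v y x -> ~ f P' x y.

Definition majority_defeat (f : VCCR) : Prop :=
  forall P x y, f P x y -> 0 < Margin P x y.

Definition tolerant_pos_involvement (F : VSCC) : Prop :=
  forall P P' v x, F P x -> add_voter P P' v ->
    (forall y, y \in cands P -> y != x -> ~ majority_pref P x y ->
       prefers P' v x y) ->
    F P' x.

Definition sc : VCCR := fun P x y =>
  [/\ x \in cands P, y \in cands P, 0 < Margin P x y &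
      forall s, majority_path P y s x -> strength P y s < Margin P x y].

Definition wc : VCCR := fun P x y =>
  [/\ x \in cands P, y \in cands P, 0 < Margin P x y &
      forall z, z \in cands P -> Margin P y z <= Margin P x z].

(* Main.v *)
Require Import Defs.
From mathcomp Require Import all_boot all_order all_algebra.
From mathcomp Require Import zify.
From Stdlib Require Import Classical.
Import Order.TTheory GRing.Theory Num.Theory.
Set Implicit Arguments. Unset Strict Implicit.
Local Open Scope ring_scope.

Lemma count_add P P' v (p : pred nat) : add_voter P P' v ->
  count p (voters P') = (p v + count p (voters P))%N.
Proof.
case=> nv eqV _ _.
have pe : perm_eq (voters P') (v :: voters P).
  apply: uniq_perm; [exact: voters_uniq | by rewrite /= nv voters_uniq | exact eqV].
by rewrite (permP pe).
Qed.

Lemma margin_add P P' v a b : add_voter P P' v ->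
  Margin P' a b = Margin P a b + (prefers P' v a b : nat)%:Z - (prefers P' v b a : nat)%:Z.
Proof.
move=> H; have [_ _ _ hb] := H.
rewrite /Margin !(count_add _ H).
have e : forall c d, count (fun u => prefers P' u c d) (voters P) =
                     count (fun u => prefers P u c d) (voters P).
  by move=> c d; apply: eq_in_count => u uP; rewrite /prefers hb.
rewrite !e; lia.
Qed.

Lemma margin_lb P P' v a b : add_voter P P' v -> Margin P a b - 1 <= Margin P' a b.
Proof.
move=> H; rewrite (margin_add _ _ H).
case: (prefers P' v a b); case: (prefers P' v b a) => /=; lia.
Qed.

Lemma margin_pref P P' v a b : add_voter P P' v -> prefers P' v b a ->
  Margin P' a b = Margin P a b - 1.
Proof.
move=> H pba; rewrite (margin_add _ _ H) pba.
have -> : prefers P' v a b = false.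
  by move: pba; rewrite /prefers => h; apply/negbTE; rewrite -leqNgt ltnW.
lia.
Qed.

Lemma margin_anti P a b : Margin P a b = - Margin P b a.
Proof. rewrite /Margin; lia. Qed.

Lemma general f : is_VCCR f -> pos_involvement_in_defeat f -> majority_defeat f ->
  tolerant_pos_involvement (fbar f).
Proof.
move=> vf pid md P P' v x [xP nfx] H hpref.
have [_ _ ec _] := H.
split; first by rewrite ec.
move=> y fyx.
have m' := md _ _ _ fyx.
have [yP' _ _] := vf _ _ _ fyx.
have yP : y \in cands P by rewrite -ec.
case: (eqVneq y x) => [eyx|nyx].
  by move: m'; rewrite eyx /Margin subrr.
case: (boolP (0 < Margin P x y)) => mxy.
  have h1 := margin_lb x y H; have h2 := margin_anti P' y x.
  lia.
apply: (pid P P' v y x yP xP (nfx y) H _ fyx).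
apply: hpref => //; by rewrite /majority_pref (negbTE mxy).
Qed.

Fixpoint allE P (m : int) a s : Prop :=
  match s with [::] => True | b :: s' => m <= Margin P a b /\ allE P m b s' end.

Lemma strength_ge P m a s : s != [::] -> (m <= strength P a s <-> allE P m a s).
Proof.
elim: s a => [//|b s IH] a _ /=.
case: s IH => [|c s] IH /=.
  by split; [move=> h; split|case].
rewrite le_min; have := IH b isT; move=> /= e.
split; [move/andP=> [h1 h2]; split=> //; exact/e | case=> h1 h2; rewrite h1 /=; exact/e].
Qed.

Lemma transfer P P' v a s m : add_voter P P' v -> mpath P a s -> allE P m a s -> 1 < m ->
  mpath P' a s /\ allE P' (m - 1) a s.
Proof.
move=> H; have [_ _ ec _] := H.
elim: s a => [//|b s IH] a /= [bP [_ mp]] [hm al] m1.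
have := margin_lb a b H => hl.
have [i1 i2] := IH b mp al m1.
split; last split=> //; last lia.
split; first by rewrite ec.
split=> //; lia.
Qed.

Lemma sc_pid : pos_involvement_in_defeat sc.
Proof.
move=> P P' v x y xP yP nsc H pyx [xP' yP' mP' hs].
have [_ _ ec _] := H.
have e := margin_pref H pyx.
apply: nsc; split=> //; first lia.
move=> s [yP0 [sn [ls mp]]].
rewrite ltNge; apply/negP => hge.
have /strength_ge al : Margin P x y <= strength P y s by [].
have [mp' al'] := transfer H mp (al (introN eqP sn)) ltac:(lia).
have := hs s (conj yP' (conj sn (conj ls mp'))).
have := (strength_ge P' (Margin P x y - 1) y (introN eqP sn)).2 al'.
lia.
Qed.

Lemma wc_pid : pos_involvement_in_defeat wc.
Proof.
move=> P P' v x y xP yP nwc H pyx [xP' yP' mP' hz].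
have [_ _ ec _] := H.
have e := margin_pref H pyx.
apply: nwc; split=> //; first lia.
move=> z zP; move: (hz z ltac:(by rewrite ec)).
rewrite !(margin_add _ _ H); move: pyx; rewrite /prefers.
set iy := index y _; set ix := index x _; set iz := index z _.
move=> hyx.
case: (ltnP ix iz); case: (ltnP iz ix); case: (ltnP iy iz); case: (ltnP iz iy) => /= *; lia.
Qed.

Lemma sc_md : majority_defeat sc.
Proof. by move=> P x y []. Qed.
Lemma wc_md : majority_defeat wc.
Proof. by move=> P x y []. Qed.

Lemma sc_vccr : is_VCCR sc.
Proof.
move=> P x y [xP yP m _]; split=> // -[_ _ m' _].
have := margin_anti P x y; lia.
Qed.
Lemma wc_vccr : is_VCCR wc.
Proof.
move=> P x y [xP yP m _]; split=> // -[_ _ m' _].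
have := margin_anti P x y; lia.
Qed.

Theorem proposition5p12 :
  (forall f : VCCR, is_VCCR f -> acyclic f ->
     pos_involvement_in_defeat f -> majority_defeat f ->
     tolerant_pos_involvement (fbar f))
  /\ (pos_involvement_in_defeat sc /\ majority_defeat sc
      /\ tolerant_pos_involvement (fbar sc))
  /\ (pos_involvement_in_defeat wc /\ majority_defeat wc
      /\ tolerant_pos_involvement (fbar wc)).
Proof.
split; first by move=> f vf _ pid md; exact: general.
split; (split; [|split]).
- exact: sc_pid.
- exact: sc_md.
- exact: general sc_vccr sc_pid sc_md.
- exact: wc_pid.
- exact: wc_md.
- exact: general wc_vccr wc_pid wc_md.
Qed.
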